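(* Let $S,T\subseteq\mathbb{Z}_{>0}$ be finite and $x\in T\setminus(T\triangleleft S)$. Then $(T\setminus\{x\})\triangleleft S=T\triangleleft S$.
   Context: For finite $S,T\subseteq\mathbb{Z}_{>0}$, $T\triangleleft S$ is computed by going through the elements of $S$ from largest to smallest; each $s$ picks the largest element of $T$ that is less than $s$ and not yet picked (if one exists); $T\triangleleft S$ is the set of picked elements. *)

(* Defs.v *)
From mathcomp Require Import all_boot.
From mathcomp Require Import finmap.
Set Implicit Arguments. Unset Strict Implicit. Unset Printing Implicit Defensive.
Local Open Scope fset_scope.

(* One step of the matching: element [s] of S picks the largest element of T
   that is < s and not yet picked (if any); [P] is the set picked so far. *)
Definition pick_step (T : {fset nat}) (P : {fset nat}) (s : nat) : {fset nat} :=
  let C := [fset t in T | (t < s) && (t \notin P)] in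
  if C == fset0 then P else \max_(t <- C) t |` P.

(* T <| S : go through S from largest to smallest. *)
Definition tri (T S : {fset nat}) : {fset nat} :=
  foldl (pick_step T) fset0 (sort geq (enum_fset S)).

Definition pos_fset (A : {fset nat}) : bool := all (fun a => 0 < a) (enum_fset A).

(* Main.v *)
Require Import Defs.
From mathcomp Require Import all_boot.
From mathcomp Require Import finmap.
Local Open Scope fset_scope.

Lemma max_in_seq (r : seq nat) : r != [::] -> \max_(t <- r) t \in r.
Proof.
elim: r => // a r IH _; rewrite big_cons inE.
case: r IH => [|b r] IH; first by rewrite big_nil maxn0 eqxx.
rewrite /maxn; case: ifP => _; last by rewrite eqxx.
by apply/orP; right; apply: IH.
Qed.

Lemma step_sub T P s : P `<=` pick_step T P s.
Proof.
rewrite /pick_step; case: ifP => _ //; exact: fsubsetU1.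
Qed.

Lemma fold_sub T l P : P `<=` foldl (pick_step T) P l.
Proof.
elim: l P => [|s l IH] P /=; first exact: fsubset_refl.
exact: fsubset_trans (step_sub T P s) (IH _).
Qed.

Lemma step_eq T P s x : x \notin pick_step T P s ->
  pick_step (T `\ x) P s = pick_step T P s.
Proof.
rewrite /pick_step.
set C := [fset t in T | (t < s) && (t \notin P)].
set C' := [fset t in T `\ x | (t < s) && (t \notin P)].
have HC' : C' = C `\ x.
  apply/fsetP => t; rewrite !inE -andbA; by [].                
case: (boolP (x \in C)) => xC.
  have C0 : (C == fset0) = false.
    by apply/negbTE/negP => /eqP C0; rewrite C0 in xC.
  rewrite C0 !inE negb_or => /andP [] mx _.
  have mC : \max_(t <- C) t \in C.
    apply: max_in_seq; apply/negP => /eqP e.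
    have : x \in enum_fset C by []. by rewrite e.
  have mC' : \max_(t <- C) t \in C' by rewrite HC' in_fsetD1 eq_sym mx mC.
  have C'0 : (C' == fset0) = false.
    by apply/negbTE/negP => /eqP C0'; rewrite C0' in mC'.
  rewrite C'0; congr (_ |` _); apply/eqP; rewrite eqn_leq; apply/andP; split.
    apply/bigmax_leqP_seq => t tC' _.
    apply: leq_bigmax_seq => //; by move: tC'; rewrite HC' in_fsetD1 => /andP [] _.
  exact: leq_bigmax_seq.
move=> _; have -> : C' = C.
  rewrite HC'; apply/fsetP => t; rewrite in_fsetD1; case: eqP => // ->.
  by rewrite (negbTE xC).
by [].
Qed.

Lemma fold_eq T x l P : x \notin foldl (pick_step T) P l ->
  foldl (pick_step (T `\ x)) P l = foldl (pick_step T) P l.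
Proof.
elim: l P => [|s l IH] P //= H.
have Hs : x \notin pick_step T P s.
  apply/negP => Hx; move/negP: H; apply.
  exact: (fsubsetP (fold_sub T l _)).
by rewrite step_eq // IH.
Qed.

Theorem lemma4p3 (S T : {fset nat}) (x : nat) :
  pos_fset S -> pos_fset T ->
  x \in T -> x \notin tri T S ->
  tri (T `\ x) S = tri T S.
Proof.
move=> _ _ _; rewrite /tri; exact: fold_eq.
Qed.
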